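(* Let $\mu$ be a probability measure on $\mathrm{Homeo}_+(\mathbb{R})$ with finite or countable support having the shiftability property. If $\phi_+(x)>0$ for some $x\in\mathbb{R}$, then $\phi_+(y)>0$ for every $y\in\mathbb{R}$. Similarly, if $\phi_-(x)>0$ for some $x$, then $\phi_-(y)>0$ for every $y$.
   Context: Setup. Let $\mu$ be a probability measure on the group $\mathrm{Homeo}_+(\mathbb{R})$ of orientation-preserving homeomorphisms of $\mathbb{R}$, supported on a finite or countable set $\{f_1,f_2,\dots\}$ with $p_i=\mu(\{f_i\})>0$, $\sum_i p_i=1$. Let $g_1,g_2,\dots$ be i.i.d. random maps with law $\mu$, and set $F_0=\mathrm{id}$, $F_n=g_n\circ\cdots\circ g_1$. For $x\in\mathbb{R}$ let $\phi_+(x)=\mathbb{P}(\lim_n F_n(x)=+\infty)$ and $\phi_-(x)=\mathbb{P}(\lim_n F_n(x)=-\infty)$. The system has the shiftability property if for every $x\in\mathbb{R}$ there exist $f,g$ with $\mu(\{f\})>0$, $\mu(\{g\})>0$ and $g(x)<x<f(x)$. *)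

(* Defs.v *)
From HB Require Import structures.
From mathcomp Require Import all_boot all_order all_algebra.
From mathcomp Require Import all_classical all_reals all_analysis.
Set Implicit Arguments. Unset Strict Implicit. Unset Printing Implicit Defensive.
Import Order.TTheory GRing.Theory Num.Theory numFieldNormedType.Exports.
Local Open Scope classical_set_scope.
Local Open Scope ring_scope.

Definition homeo_plus (R : realType) (h : R -> R) : Prop :=
  continuous h /\ (forall x y : R, x < y -> h x < h y) /\
  (forall y : R, exists x, h x = y).

Definition iid_seq d (T : measurableType d) (R : realType)
  (P : probability T R) (xi : nat -> T -> nat) : Prop :=
  (forall n k, measurable (xi n @^-1` [set k])) /\
  (forall (n : nat) (k : nat -> nat),
     P (\bigcap_(i in `I_n) (xi i @^-1` [set k i])) =
     (\prod_(i < n) P (xi 0%N @^-1` [set k i]))%E).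

(* F_n = g_n o ... o g_1 where g_(i+1) = f (xi i);  F_0 = id. *)
Fixpoint Fwalk (R : realType) (T : Type) (f : nat -> R -> R)
  (xi : nat -> T -> nat) (n : nat) (w : T) (x : R) : R :=
  match n with
  | 0%N => x
  | m.+1 => f (xi m w) (Fwalk f xi m w x)
  end.

Definition phi_plus d (T : measurableType d) (R : realType)
  (P : probability T R) (f : nat -> R -> R) (xi : nat -> T -> nat) (x : R)
  : \bar R :=
  P [set w | (fun n => Fwalk f xi n w x) @ \oo --> +oo].

Definition phi_minus d (T : measurableType d) (R : realType)
  (P : probability T R) (f : nat -> R -> R) (xi : nat -> T -> nat) (x : R)
  : \bar R :=
  P [set w | (fun n => Fwalk f xi n w x) @ \oo --> -oo].

(* mu({h}) for the law mu of the random map g_1 = f (xi 0). *)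
Definition mu_atom d (T : measurableType d) (R : realType)
  (P : probability T R) (f : nat -> R -> R) (xi : nat -> T -> nat)
  (h : R -> R) : \bar R :=
  P [set w | f (xi 0%N w) = h].

Definition shiftable d (T : measurableType d) (R : realType)
  (P : probability T R) (f : nat -> R -> R) (xi : nat -> T -> nat) : Prop :=
  forall x : R, exists h g : R -> R,
    (0 < mu_atom P f xi h)%E /\ (0 < mu_atom P f xi g)%E /\ g x < x < h x.

(* Main.v *)
Require Import Defs.
From HB Require Import structures.
From mathcomp Require Import all_boot all_order all_algebra.
From mathcomp Require Import all_classical all_reals all_analysis.
Import Order.TTheory GRing.Theory Num.Theory numFieldNormedType.Exports.
Local Open Scope classical_set_scope.
Local Open Scope ring_scope.
Section Walk.
Variable R : realType.
Variable f : nat -> R -> R.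

Definition W (s : nat -> nat) (n : nat) (z : R) : R :=
  Fwalk f (fun i (_ : unit) => s i) n tt z.

Lemma W_S s n z : W s n.+1 z = f (s n) (W s n z).
Proof. by []. Qed.

Lemma W_dep s s' n z : (forall i, (i < n)%N -> s i = s' i) -> W s n z = W s' n z.
Proof.
elim: n => [//|n IH] H; rewrite !W_S IH ?H //.
by move=> i Hi; apply: H; apply: ltnW.
Qed.

Lemma Fwalk_W (T : Type) (xi : nat -> T -> nat) n w z :
  Fwalk f xi n w z = W (fun i => xi i w) n z.
Proof. by elim: n => //= n ->. Qed.

Lemma W_add s m n z : W s (n + m) z = W (fun i => s (i + m)%N) n (W s m z).
Proof. by elim: n => [//|n IH]; rewrite addSn !W_S IH. Qed.

Hypothesis finc : forall k x y, x < y -> f k x < f k y.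

Lemma W_le s n z z' : z <= z' -> W s n z <= W s n z'.
Proof.
move=> H; elim: n => [//|n IH]; rewrite !W_S.
move: IH; rewrite le_eqVlt => /orP [/eqP ->//|/finc H2]; exact: ltW.
Qed.
End Walk.
Arguments W {R}.

Definition toinf {R : realType} (u : nat -> R) : Prop :=
  forall M : nat, exists N, forall n, (N <= n)%N -> M%:R < u n.

Lemma toinfP (R : realType) (u : nat -> R) : u @ \oo --> +oo <-> toinf u.
Proof.
split.
  move=> /cvgryPgt H M; have [N _ HN] := H M%:R; exists N => n Hn; exact: HN.
move=> H; apply/cvgryPgt => A.
have [N HN] := H (Num.trunc `|A|).+1.
exists N => // n Hn /=.
apply: (le_lt_trans _ (HN n Hn)).
apply: (le_trans (ler_norm A)); exact: ltW (truncnS_gt _).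
Qed.
Lemma reach (R : realType) (f : nat -> R -> R) (ok : nat -> Prop) :
  (forall k x y, x < y -> f k x < f k y) ->
  (forall k y, exists x, f k x = y) ->
  (forall z, exists j, ok j /\ z < f j z) ->
  forall y x, exists m k, (forall i, (i < m)%N -> ok (k i)) /\ x <= W f k m y.
Proof.
move=> finc fsurj up y x.
apply: contrapT => Hn.
pose S := [set z | exists m k, (forall i, (i < m)%N -> ok (k i)) /\ z = W f k m y].
have Slt : forall z, S z -> z < x.
  move=> z [m [k [Hk ->]]]; rewrite ltNge; apply/negP => Hle.
  by apply: Hn; exists m, k.
have hs : has_sup S.
  split; first by exists y, 0%N, (fun _ => 0%N).
  by exists x => z /Slt /ltW.
set s := sup S.
have [j [okj Hj]] := up s.
have [z0 Hz0] := fsurj j s.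
have z0s : z0 < s.
  rewrite ltNge; apply/negP => H.
  move: H; rewrite le_eqVlt => /orP [/eqP E|/(finc j) H].
    by move: Hj; rewrite {2}E Hz0 ltxx.
  by move: H; rewrite Hz0 => /(lt_trans Hj); rewrite ltxx.
have hpos : 0 < s - z0 by rewrite subr_gt0.
have [z Sz Hz] := sup_adherent hpos hs.
move: Hz; rewrite opprB addrC subrK => Hz.
have Sfz : S (f j z).
  case: Sz => m [k [Hk Ez]].
  exists m.+1, (fun i => if i == m then j else k i); split.
    move=> i; rewrite ltnS leq_eqVlt => /orP [/eqP ->|Hi]; first by rewrite eqxx.
    by rewrite (ltn_eqF Hi); apply: Hk.
  rewrite W_S eqxx Ez; congr (f j _); apply: W_dep => i Hi.
  by rewrite (ltn_eqF Hi).
have := sup_upper_bound hs Sfz; rewrite -/s.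
by rewrite leNgt -{1}Hz0 finc.
Qed.
Section Meas.
Variables (d : measure_display) (T : measurableType d) (R : realType).
Variables (P : probability T R) (xi : nat -> T -> nat).
Hypothesis iid : iid_seq P xi.

Definition pk j := P (xi 0%N @^-1` [set j]).
Definition cyl m (k : nat -> nat) := \bigcap_(i in `I_m) (xi i @^-1` [set k i]).
Definition Aset m (g : (nat -> nat) -> Prop) := [set w | g (fun i => xi (i + m)%N w)].

Lemma mxi n j : measurable (xi n @^-1` [set j]).
Proof. exact: iid.1. Qed.

Lemma cyl0 k : cyl 0 k = setT.
Proof. by rewrite /cyl; apply/seteqP; split => // w _ i. Qed.

Lemma cylS m k : cyl m.+1 k = cyl m k `&` xi m @^-1` [set k m].
Proof.
rewrite /cyl; apply/seteqP; split => w.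
  move=> H; split; first by move=> i /= Hi; apply: H => /=; apply: ltnW.
  by apply: H => /=.
move=> [H1 H2] i /=; rewrite ltnS leq_eqVlt => /orP [/eqP ->//|Hi].
exact: H1.
Qed.

Lemma cyl_ext m k k' : (forall i, (i < m)%N -> k i = k' i) -> cyl m k = cyl m k'.
Proof.
move=> H; rewrite /cyl; apply/seteqP; split => w Hw i /= Hi.
  by rewrite /= -H //; apply: Hw.
by rewrite /= H //; apply: Hw.
Qed.

Lemma mcyl m k : measurable (cyl m k).
Proof.
elim: m => [|m IH]; first by rewrite cyl0.
by rewrite cylS; apply: measurableI => //; apply: mxi.
Qed.

Lemma Pcyl m k : P (cyl m k) = (\prod_(i < m) pk (k i))%E.
Proof. exact: iid.2. Qed.

Lemma PcylS m k : P (cyl m.+1 k) = (P (cyl m k) * pk (k m))%E.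
Proof. by rewrite !Pcyl big_ord_recr. Qed.

Lemma Pfin A : measurable A -> P A = (fine (P A))%:E.
Proof.
move=> mA; rewrite fineK // ge0_fin_numE //.
exact: le_lt_trans (probability_le1 P mA) (ltry _).
Qed.

Definition good (g : (nat -> nat) -> Prop) :=
  (forall m, measurable (Aset m g)) /\
  (forall m k, P (cyl m k `&` Aset m g) = (P (cyl m k) * P (Aset 0 g))%E).

Definition fd n (g : (nat -> nat) -> Prop) :=
  forall s s', (forall i, (i < n)%N -> s i = s' i) -> g s -> g s'.

Definition scons (j : nat) (s : nat -> nat) : nat -> nat :=
  fun i => if i is i'.+1 then s i' else j.

Lemma Aset_split m g :
  Aset m g = \bigcup_j (xi m @^-1` [set j] `&` Aset m.+1 (fun s => g (scons j s))).
Proof.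
have E w : scons (xi m w) (fun i => xi (i + m.+1)%N w) = (fun i => xi (i + m)%N w).
  by apply: funext => -[|i] //=; rewrite addSnnS.
apply/seteqP; split => w.
  move=> H; exists (xi m w) => //; split => //=.
  by rewrite /Aset /= E.
move=> [j _ [/= Hj]]; rewrite /Aset /= -Hj E //.
Qed.

Lemma Aset_ext m g g' : (forall s, g s <-> g' s) -> Aset m g = Aset m g'.
Proof. by move=> H; apply/seteqP; split => w /= /H. Qed.

Lemma good_ext g g' : (forall s, g s <-> g' s) -> good g -> good g'.
Proof.
move=> H [H1 H2]; have E m : Aset m g = Aset m g' by apply: Aset_ext.
by split => [m|m k]; rewrite -!E.
Qed.
Lemma fd_good n : forall g, fd n g -> good g.
Proof.
elim: n => [|n IH] g Hg.
  have Hg0 s s' : g s -> g s' by apply: Hg => i; rewrite ltn0.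
  case: (pselect (g (fun _ => 0%N))) => H0.
    have E m : Aset m g = setT.
      by apply/seteqP; split => // w _; apply: Hg0 H0.
    by split => [m|m k]; rewrite !E ?setIT ?probability_setT ?mule1.
  have E m : Aset m g = set0.
    by apply/seteqP; split => // w Hw; apply: H0; apply: Hg0 Hw.
  by split => [m|m k]; rewrite !E ?setI0 ?measure0 ?mule0.
pose gj j := fun s => g (scons j s).
have fdj j : fd n (gj j).
  move=> s s' H; apply: Hg => -[|i] //= Hi; exact: H.
have G j := IH _ (fdj j).
have mA m : measurable (Aset m g).
  rewrite Aset_split; apply: bigcup_measurable => j _.
  by apply: measurableI; [apply: mxi | apply: (G j).1].
pose S := (\sum_(j <oo) (pk j * P (Aset 0 (gj j))))%E.
have key m k : P (cyl m k `&` Aset m g) = (P (cyl m k) * S)%E.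
  rewrite Aset_split setI_bigcupr measure_semi_bigcup; first last.
  - rewrite -setI_bigcupr -Aset_split; exact: measurableI (mcyl _ _) (mA _).
  - move=> i j _ _ [w [[_ [Hi _]] [_ [Hj _]]]].
    by rewrite -Hi -Hj.
  - move=> j; apply: measurableI; first exact: mcyl.
    by apply: measurableI; [apply: mxi | apply: (G j).1].
  rewrite (Pfin _ (mcyl m k)) -nneseriesZl; last first.
    by move=> j _; apply: mule_ge0.
  apply: eq_eseriesr => j _.
  pose k' := fun i => if i == m then j else k i.
  have Ek : cyl m k = cyl m k'.
    by apply: cyl_ext => i Hi; rewrite /k' (ltn_eqF Hi).
  rewrite setIA Ek.
  have -> : cyl m k' `&` xi m @^-1` [set j] = cyl m.+1 k'.
    by rewrite cylS /k' eqxx.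
  change (fun s => g (scons j s)) with (gj j).
  have HH := (G j).2 m.+1 k'.
  transitivity (P (cyl m.+1 k') * P (Aset 0 (gj j)))%E; first exact: HH.
  rewrite PcylS -Ek -(Pfin _ (mcyl m k)) /k' eqxx muleA //.
split => // m k.
suff -> : P (Aset 0 g) = S by apply: key.
by have := key 0%N k; rewrite cyl0 !setTI probability_setT mul1e.
Qed.
Lemma Pcyl_fin m k : P (cyl m k) \is a fin_num.
Proof. by rewrite (Pfin _ (mcyl m k)). Qed.

Lemma good_cup (g : nat -> (nat -> nat) -> Prop) :
  (forall N, good (g N)) -> (forall N s, g N s -> g N.+1 s) ->
  good (fun s => exists N, g N s).
Proof.
move=> Hg Hmon.
have EA m : Aset m (fun s => exists N, g N s) = \bigcup_N Aset m (g N).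
  by apply/seteqP; split => w /= [N H]; exists N.
have mB m : measurable (\bigcup_N Aset m (g N)).
  by apply: bigcup_measurable => N _; apply: (Hg N).1.
split => [m|m k]; rewrite !EA //.
rewrite setI_bigcupr.
have C1 := @nondecreasing_cvg_mu _ _ _ P (fun N => cyl m k `&` Aset m (g N))
  (fun N => measurableI _ _ (mcyl m k) ((Hg N).1 m)).
have C2 := @nondecreasing_cvg_mu _ _ _ P (fun N => Aset 0 (g N))
  (fun N => (Hg N).1 0%N) (mB 0%N).
have C3 := cvgeZl (Pcyl_fin m k) (C2 _).
rewrite -(cvg_lim (@ereal_hausdorff R) (C1 _ _)).
- rewrite -(cvg_lim (@ereal_hausdorff R) (C3 _)).
  + suff -> : (P \o (fun N => cyl m k `&` Aset m (g N))) =
       (fun n => P (cyl m k) * (P \o (fun N => Aset 0 (g N))) n)%E by [].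
    by apply: funext => N /=; apply: (Hg N).2.
  + apply/nondecreasing_seqP => N; apply/subsetPset => w Ha; exact: Hmon.
- by apply: bigcup_measurable => N _; apply: measurableI (mcyl _ _) ((Hg N).1 m).
- apply/nondecreasing_seqP => N; apply/subsetPset => w [Hc Ha]; split => //.
  exact: Hmon.
Qed.

Lemma good_cap (g : nat -> (nat -> nat) -> Prop) :
  (forall N, good (g N)) -> (forall N s, g N.+1 s -> g N s) ->
  good (fun s => forall N, g N s).
Proof.
move=> Hg Hmon.
have EA m : Aset m (fun s => forall N, g N s) = \bigcap_N Aset m (g N).
  by apply/seteqP; split => w /= H N; [move=> _|]; apply: H.
have mB m : measurable (\bigcap_N Aset m (g N)).
  by apply: bigcap_measurable => [|N _]; [exists 0%N | apply: (Hg N).1].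
split => [m|m k]; rewrite !EA //.
rewrite -bigcapIr; last by exists 0%N.
have fin0 A : measurable A -> (P A < +oo)%E by move=> mA; rewrite (Pfin _ mA) ltry.
have C1 := @nonincreasing_cvg_mu _ _ _ P (fun N => cyl m k `&` Aset m (g N))
  (fin0 _ (measurableI _ _ (mcyl m k) ((Hg 0%N).1 m)))
  (fun N => measurableI _ _ (mcyl m k) ((Hg N).1 m)).
have C2 := @nonincreasing_cvg_mu _ _ _ P (fun N => Aset 0 (g N))
  (fin0 _ ((Hg 0%N).1 0%N)) (fun N => (Hg N).1 0%N) (mB 0%N).
have C3 := cvgeZl (Pcyl_fin m k) (C2 _).
rewrite -(cvg_lim (@ereal_hausdorff R) (C1 _ _)).
- rewrite -(cvg_lim (@ereal_hausdorff R) (C3 _)).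
  + suff -> : (P \o (fun N => cyl m k `&` Aset m (g N))) =
       (fun n => P (cyl m k) * (P \o (fun N => Aset 0 (g N))) n)%E by [].
    by apply: funext => N /=; apply: (Hg N).2.
  + apply/nonincreasing_seqP => N; apply/subsetPset => w Ha; exact: Hmon.
- by apply: bigcap_measurable => [|N _]; [exists 0%N | apply: measurableI (mcyl _ _) ((Hg N).1 m)].
- apply/nonincreasing_seqP => N; apply/subsetPset => w [Hc Ha]; split => //.
  exact: Hmon.
Qed.
Variable f : nat -> R -> R.

Definition gx z (s : nat -> nat) := toinf (fun n => W f s n z).

Lemma good_gx z : good (gx z).
Proof.
pose h M N N' s := forall n, (N <= n)%N -> (n <= N + N')%N -> M%:R < W f s n z.
have Gh M N N' : good (h M N N').
  apply: (@fd_good (N + N').+1) => s s' H Hs n H1 H2.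
  rewrite -(@W_dep _ f s s' n z); first exact: Hs.
  by move=> i Hi; apply: H; apply: leq_trans Hi (leqW H2).
have GD M N : good (fun s => forall N', h M N N' s).
  apply: good_cap => // N' s Hs n H1 H2; apply: Hs => //.
  by rewrite addnS; apply: leqW.
have GU M : good (fun s => exists N, forall N', h M N N' s).
  apply: good_cup => // N s Hs N' n H1 H2; apply: (Hs N'.+1).
    exact: ltnW.
  by rewrite addnS -addSn.
have GA : good (fun s => forall M, exists N, forall N', h M N N' s).
  apply: good_cap => // M s [N HN]; exists N => N' n H1 H2.
  apply: lt_trans (HN N' n H1 H2); by rewrite ltr_nat.
apply: good_ext GA => s; split.
  move=> H M; have [N HN] := H M; exists N => n Hn.
  by apply: (HN (n - N)%N) => //; rewrite subnKC.
move=> H M; have [N HN] := H M; exists N => N' n H1 _; exact: HN.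
Qed.
Hypothesis finc : forall k x y, x < y -> f k x < f k y.
Hypothesis fsurj : forall k y, exists x, f k x = y.
Hypothesis up : forall z, exists j, (0 < pk j)%E /\ z < f j z.

Lemma core x y : (0 < P (Aset 0 (gx x)))%E -> (0 < P (Aset 0 (gx y)))%E.
Proof.
move=> Hx.
have [m [k [Hk Hle]]] := @reach R f (fun j => (0 < pk j)%E) finc fsurj up y x.
set x' := W f k m y in Hle.
have Gx' := good_gx x'; have Gy := good_gx y; have Gx := good_gx x.
have H1 := Gx'.2 m k.
have H2 : (P (Aset 0 (gx x)) <= P (Aset 0 (gx x')))%E.
  apply: le_measure; rewrite ?inE; [exact: Gx.1 | exact: Gx'.1 |].
  move=> w Hw M; have [N HN] := Hw M; exists N => n Hn.
  apply: lt_le_trans (HN n Hn) _; exact: W_le.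
have H3 : (0 < P (cyl m k))%E.
  rewrite Pcyl; move: Hk; elim: m {x' Hle H1 H2 Gx'} => [_|m IH H].
    by rewrite big_ord0.
  rewrite big_ord_recr; apply: mule_gt0; last exact: H.
  by apply: IH => i Hi; apply: H; apply: ltnW.
have H4 : cyl m k `&` Aset m (gx x') `<=` Aset 0 (gx y).
  move=> w [Hc Ha] M; have [N HN] := Ha M; exists (N + m)%N => n Hn.
  have Hmn : (m <= n)%N by apply: leq_trans Hn; rewrite leq_addl.
  have -> : (fun i => xi (i + 0)%N w) = (fun i => xi i w).
    by apply: funext => i; rewrite addn0.
  rewrite -(subnK Hmn) W_add.
  have -> : W f (fun i => xi i w) m y = x'.
    by apply: W_dep => i Hi; apply: Hc.
  by apply: HN; rewrite leq_subRL // addnC.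
apply: lt_le_trans (mule_gt0 H3 (lt_le_trans Hx H2)) _.
rewrite -H1; apply: le_measure; rewrite ?inE //.
  exact: measurableI (mcyl _ _) (Gx'.1 m).
exact: Gy.1.
Qed.
End Meas.
Arguments pk {d T R} P xi j.
Arguments Aset {d T} xi m g.
Arguments gx {R} f z s.
Arguments mxi {d T R P xi} iid n j.
Arguments core {d T R P xi} iid {f} finc fsurj up x y _.
Lemma atom_pos (d : measure_display) (T : measurableType d) (R : realType)
  (P : probability T R) (f : nat -> R -> R) (xi : nat -> T -> nat) h :
  iid_seq P xi -> (0 < mu_atom P f xi h)%E ->
  exists j, (0 < pk P xi j)%E /\ f j = h.
Proof.
move=> iid Hpos; apply: contrapT => Hn.
have Z j : f j = h -> pk P xi j = 0%E.
  move=> Hj; apply/eqP; rewrite eq_le measure_ge0 andbT leNgt; apply/negP => Hp.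
  by apply: Hn; exists j.
have E : [set w | f (xi 0%N w) = h] =
    \bigcup_(j in [set j | f j = h]) (xi 0%N @^-1` [set j]).
  apply/seteqP; split => w /=; first by move=> H; exists (xi 0%N w).
  by move=> [j Hj ->].
move: Hpos; rewrite /mu_atom E measure_bigcup.
- rewrite eseries0 ?ltxx // => i _; rewrite inE => Hi; exact: Z.
- by move=> j _; apply: (mxi iid).
- by move=> i j _ _ [w [/= Hi Hj]]; rewrite -Hi -Hj.
Qed.

Arguments atom_pos {d T R P f xi h} iid _.

Lemma phi_plus_eq (d : measure_display) (T : measurableType d) (R : realType)
  (P : probability T R) (f : nat -> R -> R) (xi : nat -> T -> nat) x :
  phi_plus P f xi x = P (Aset xi 0 (gx f x)).
Proof.
rewrite /phi_plus; congr (P _); apply/seteqP.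
have E w : (fun n => Fwalk f xi n w x) = (fun n => W f (fun i => xi (i + 0)%N w) n x).
  apply: funext => n; rewrite Fwalk_W; congr W; apply: funext => i; by rewrite addn0.
split => w /=.
  by rewrite E => /toinfP.
by move=> H; rewrite E; apply/toinfP.
Qed.

Lemma Fwalk_neg (R : realType) (T : Type) (f : nat -> R -> R) (xi : nat -> T -> nat) n w x :
  Fwalk (fun k z => - f k (- z)) xi n w x = - Fwalk f xi n w (- x).
Proof. by elim: n => [|n IH] /=; rewrite ?opprK // IH opprK. Qed.

Lemma phi_minus_eq (d : measure_display) (T : measurableType d) (R : realType)
  (P : probability T R) (f : nat -> R -> R) (xi : nat -> T -> nat) x :
  phi_minus P f xi x = phi_plus P (fun k z => - f k (- z)) xi (- x).
Proof.
rewrite /phi_minus /phi_plus; congr (P _); apply/seteqP.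
have E w : (fun n => Fwalk (fun k z => - f k (- z)) xi n w (- x)) =
           - (fun n => Fwalk f xi n w x).
  by apply: funext => n /=; rewrite Fwalk_neg !opprK.
split => w /=; rewrite E.
  by move=> H; apply/cvgNry.
by move/cvgNry.
Qed.

Theorem lemma2 (d : measure_display) (T : measurableType d) (R : realType)
  (P : probability T R) (f : nat -> R -> R) (xi : nat -> T -> nat) :
  (forall k, homeo_plus (f k)) ->
  iid_seq P xi ->
  shiftable P f xi ->
  ((exists x : R, (0 < phi_plus P f xi x)%E) ->
     forall y : R, (0 < phi_plus P f xi y)%E) /\
  ((exists x : R, (0 < phi_minus P f xi x)%E) ->
     forall y : R, (0 < phi_minus P f xi y)%E).
Proof.
move=> Hh iid Hsh.
have finc k : forall x y, x < y -> f k x < f k y by case: (Hh k) => _ [].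
have fsurj k : forall y, exists x, f k x = y by case: (Hh k) => _ [].
split.
  move=> [x Hx] y; rewrite phi_plus_eq; rewrite phi_plus_eq in Hx.
  apply: (core iid finc fsurj) Hx => z.
  have [h [g [Hh1 [_ /andP [_ Hz]]]]] := Hsh z.
  have [j [Hj Ej]] := atom_pos iid Hh1.
  by exists j; rewrite Ej.
move=> [x Hx] y; rewrite phi_minus_eq phi_plus_eq.
rewrite phi_minus_eq phi_plus_eq in Hx.
apply: (core iid _ _ _) Hx.
- by move=> k a b Hab; rewrite ltrN2; apply: finc; rewrite ltrN2.
- move=> k b; have [a Ha] := fsurj k (- b); exists (- a).
  by rewrite opprK Ha opprK.
- move=> z; have [h [g [_ [Hg1 /andP [Hz _]]]]] := Hsh (- z).
  have [j [Hj Ej]] := atom_pos iid Hg1.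
  by exists j; rewrite Ej -ltrN2 opprK.
Qed.
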